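(* Let $\mathcal{G} = \{G_1, \ldots, G_p\}$ and $\mathcal{H} = \{H_1, \ldots, H_q\}$ be families of connected graphs such that the graphs in $\mathcal{G}$ are mutually cospectral, the graphs in $\mathcal{H}$ are mutually cospectral, and the common spectrum of the graphs in $\mathcal{G}$ differs from the common spectrum of the graphs in $\mathcal{H}$. Suppose at least one of the following conditions holds: (1) every graph in $\mathcal{G} \cup \mathcal{H}$ is Cartesian prime; (2) $\gcd(|V(G)|, |V(H)|) = 1$ for all $G \in \mathcal{G}$ and $H \in \mathcal{H}$; (3) there is no Cartesian prime graph $P$ that is a Cartesian factor of both some $G \in \mathcal{G}$ and some $H \in \mathcal{H}$. Then the graphs $F_{ij} = G_i \square H_j$, $1 \le i \le p$, $1 \le j \le q$, are connected, all have the same spectrum, and are pairwise non-isomorphic; that is, $\mathcal{F} = \{F_{ij}\}$ is a connected mutually cospectral family of size $pq$.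
   Context: All graphs are finite and simple. Spectra are taken with respect to a fixed choice of matrix representation: either the adjacency matrix or the Laplacian matrix (the same choice throughout). Two graphs are cospectral if they have the same spectrum and are non-isomorphic; a family of graphs is mutually cospectral if its members all have the same spectrum and are pairwise non-isomorphic. $G \square H$ denotes the Cartesian product. A graph is Cartesian prime if it is nontrivial (at least two vertices) and is not isomorphic to a Cartesian product of two nontrivial graphs. A Cartesian factor of $G$ is a graph $G_1$ with $G \cong G_1 \square G_2$ for some graph $G_2$. Connected graphs have a unique (up to isomorphism and order) factorization into Cartesian prime graphs. *)

(* Defs.v *)
From HB Require Import structures.
From mathcomp Require Import all_boot all_order all_algebra.
Unset Printing Implicit Defensive.
Import GRing.Theory.
Local Open Scope ring_scope.

Record graph := Graph {
  gV : finType;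
  gE : rel gV;
  gE_sym : symmetric gE;
  gE_irr : irreflexive gE }.
Arguments gE : clear implicits.
Arguments gE_sym : clear implicits.
Arguments gE_irr : clear implicits.

Definition isomorphic (G H : graph) : Prop :=
  exists f : gV G -> gV H, bijective f /\ forall x y, gE G x y = gE H (f x) (f y).

Definition connected (G : graph) : Prop :=
  (0 < #|gV G|)%N /\ forall x y : gV G, connect (gE G) x y.

Definition nontrivial (G : graph) : Prop := (1 < #|gV G|)%N.

Definition cprod_rel (G H : graph) : rel (gV G * gV H) :=
  fun u v => ((u.1 == v.1) && gE H u.2 v.2) || ((u.2 == v.2) && gE G u.1 v.1).

Lemma cprod_sym G H : symmetric (cprod_rel G H).
Proof.
move=> [a b] [c d]; rewrite /cprod_rel /= (eq_sym a) (eq_sym b).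
by rewrite (gE_sym H b) (gE_sym G a).
Qed.

Lemma cprod_irr G H : irreflexive (cprod_rel G H).
Proof. by move=> [a b]; rewrite /cprod_rel /= !(gE_irr G) !(gE_irr H) !andbF. Qed.

Definition cprod (G H : graph) : graph :=
  @Graph (gV G * gV H)%type (cprod_rel G H) (@cprod_sym G H) (@cprod_irr G H).

Definition cart_prime (G : graph) : Prop :=
  nontrivial G /\
  ~ (exists G1 G2 : graph, nontrivial G1 /\ nontrivial G2 /\ isomorphic G (cprod G1 G2)).

Definition cart_factor (G1 G : graph) : Prop :=
  exists G2 : graph, isomorphic G (cprod G1 G2).

Inductive mat_kind := Adjacency | Laplacian.

Definition vidx {G : graph} (i : 'I_#|gV G|) : gV G := enum_val i.

Definition adj_mx (G : graph) : 'M[int]_#|gV G| :=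
  \matrix_(i, j) ((gE G (vidx i) (vidx j) : nat)%:Z).

Definition degree {G : graph} (x : gV G) : nat := #|[set y | gE G x y]|.

Definition lap_mx (G : graph) : 'M[int]_#|gV G| :=
  \matrix_(i, j) ((if i == j then (degree (vidx i))%:Z else 0) -
                  (gE G (vidx i) (vidx j) : nat)%:Z).

Definition rep_mx (m : mat_kind) (G : graph) : 'M[int]_#|gV G| :=
  match m with Adjacency => adj_mx G | Laplacian => lap_mx G end.

(* The spectrum (multiset of eigenvalues, with multiplicity) is encoded by
   the characteristic polynomial of the chosen matrix. *)
Definition spectrum (m : mat_kind) (G : graph) : {poly int} := char_poly (rep_mx m G).

Definition same_spectrum (m : mat_kind) (G H : graph) : Prop :=
  spectrum m G = spectrum m H.

Definition mutually_cospectral (m : mat_kind) {I : finType} (F : I -> graph) : Prop :=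
  (forall i j, same_spectrum m (F i) (F j)) /\
  (forall i j, i != j -> ~ isomorphic (F i) (F j)).

(* Main.v *)
Require Import Defs.
From mathcomp Require Import all_boot all_order all_algebra.
From mathcomp Require Import fingroup perm algC sesquilinear spectral.
From Stdlib Require Import Classical_Prop.


Lemma connect_hom (T T' : finType) (e : rel T) (e' : rel T') (f : T -> T') :
  (forall x y, e x y -> connect e' (f x) (f y)) ->
  forall x y, connect e x y -> connect e' (f x) (f y).
Proof.
move=> H x y /connectP [p]; elim: p x => [|z p IH] x /=.
  by move=> _ ->; exact: connect0.
by case/andP=> exz pz yeq; apply: connect_trans (H _ _ exz) (IH _ pz yeq).
Qed.

Lemma isoP (G H : graph) (f : gV G -> gV H) (g : gV H -> gV G) :
  cancel f g -> cancel g f -> (forall x y, gE G x y = gE H (f x) (f y)) ->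
  isomorphic G H.
Proof. by move=> fK gK hE; exists f; split => //; exists g. Qed.

Lemma iso_refl G : isomorphic G G.
Proof. by apply: (@isoP G G id id). Qed.

Lemma iso_sym G H : isomorphic G H -> isomorphic H G.
Proof.
case=> f [[g fK gK] hE]; apply: (@isoP H G g f gK fK) => x y.
by rewrite hE !gK.
Qed.

Lemma iso_trans G H K : isomorphic G H -> isomorphic H K -> isomorphic G K.
Proof.
case=> f [[g fK gK] hE] [f' [[g' fK' gK'] hE']].
apply: (@isoP _ _ (f' \o f) (g \o g')).
- by move=> x /=; rewrite fK' fK.
- by move=> x /=; rewrite gK gK'.
by move=> x y /=; rewrite hE hE'.
Qed.

Lemma iso_card G H : isomorphic G H -> #|gV G| = #|gV H|.
Proof. by case=> f [bf _]; exact: bij_eq_card bf. Qed.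

Lemma card_cprod G H : #|gV (cprod G H)| = (#|gV G| * #|gV H|)%N.
Proof. exact: card_prod. Qed.

Lemma cprod_iso G G' H H' : isomorphic G G' -> isomorphic H H' ->
  isomorphic (cprod G H) (cprod G' H').
Proof.
case=> f [[g fK gK] hE] [f' [[g' fK' gK'] hE']].
apply: (@isoP (cprod G H) (cprod G' H') (fun x => (f x.1, f' x.2))
         (fun x => (g x.1, g' x.2))).
- by case=> a b /=; rewrite fK fK'.
- by case=> a b /=; rewrite gK gK'.
case=> a b [c d]; rewrite /= /cprod_rel /= hE hE'.
by rewrite (inj_eq (can_inj fK)) (inj_eq (can_inj fK')).
Qed.

Lemma cprod_comm G H : isomorphic (cprod G H) (cprod H G).
Proof.
apply: (@isoP (cprod G H) (cprod H G) (fun x => (x.2, x.1)) (fun x => (x.2, x.1))).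
- by case.
- by case.
by case=> a b [c d]; rewrite /= /cprod_rel /= orbC.
Qed.

Lemma cprod_assoc G H K :
  isomorphic (cprod (cprod G H) K) (cprod G (cprod H K)).
Proof.
apply: (@isoP (cprod (cprod G H) K) (cprod G (cprod H K))
   (fun x => (x.1.1, (x.1.2, x.2))) (fun x => ((x.1, x.2.1), x.2.2))).
- by case=> [[a b] c].
- by case=> [a [b c]].
case=> [[a b] c] [[a' b'] c']; rewrite /= /cprod_rel /= !xpair_eqE.
rewrite /cprod_rel /=.
by case: (a == a'); case: (b == b'); case: (c == c'); case: (gE G a a'); case: (gE H b b'); case: (gE K c c').
Qed.

Lemma cprod_unit G K : #|gV K| = 1%N -> isomorphic (cprod G K) G.
Proof.
move=> K1; have [k0 _] : {k0 : gV K | True}.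
  by case: (pickP (gV K)) => [k _|]; [exists k | move/eq_card0; rewrite K1].
have allk : forall k : gV K, k = k0.
  move=> k; apply/eqP; move: K1; rewrite (cardD1 k0) => /eqP; rewrite eqSS.
  by move/eqP/card0_eq/(_ k); rewrite !inE andbT; case: eqP.
apply: (@isoP (cprod G K) G (fun x => x.1) (fun x => (x, k0))).
- by case=> a k /=; rewrite (allk k).
- by [].
case=> a k [a' k']; rewrite /= /cprod_rel /= (allk k) (allk k') eqxx (gE_irr K).
by rewrite andbF.
Qed.

Definition induced (G : graph) (P : pred (gV G)) : graph :=
  @Graph {: {x : gV G | P x}} (fun x y => gE G (val x) (val y))
    (fun x y => gE_sym G (val x) (val y)) (fun x => gE_irr G (val x)).

Arguments iso_sym {G H}.
Arguments iso_trans {G H K}.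
Arguments iso_card {G H}.
Arguments cprod_iso {G G' H H'}.

Lemma connect_inv (T : finType) (T' : eqType) (e : rel T) (k : T -> T') :
  (forall x y, e x y -> k x = k y) -> forall x y, connect e x y -> k x = k y.
Proof.
move=> H x y /connectP [p]; elim: p x => [|z p IH] x /=; first by move=> _ ->.
by case/andP=> exz pz yeq; rewrite (H _ _ exz) (IH _ pz yeq).
Qed.

Lemma adj_xor (C D : graph) (u v : gV C * gV D) :
  cprod_rel C D u v -> (u.1 == v.1) = (u.2 != v.2).
Proof.
rewrite /cprod_rel; case/orP=> /andP[/eqP e h].
  by rewrite e eqxx; case: eqP h => // ->; rewrite gE_irr.
by rewrite e eqxx /=; case: eqP h => // ->; rewrite gE_irr.
Qed.

Lemma square_dir (T1 T2 : eqType) (y1 y2 y3 y4 : T1 * T2) :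
  (y1.1 == y2.1) = (y1.2 != y2.2) -> (y2.1 == y3.1) = (y2.2 != y3.2) ->
  (y3.1 == y4.1) = (y3.2 != y4.2) -> (y4.1 == y1.1) = (y4.2 != y1.2) ->
  y1 != y3 -> y2 != y4 -> y1.2 == y2.2 -> y4.2 == y3.2.
Proof.
case: y1 y2 y3 y4 => [c1 d1] [c2 d2] [c3 d3] [c4 d4] /=.
move=> h12 h23 h34 h41 n13 n24 /eqP e12.
apply/negPn/negP => n43.
have /eqP c34 : c3 == c4 by rewrite h34 eq_sym.
case: (eqVneq d2 d3) => e23.
  case: (eqVneq d4 d1) => e41.
    by move: n43; rewrite e41 e12 e23 eqxx.
  have /eqP c41 : c4 == c1 by rewrite h41.
  by move: n13; rewrite xpair_eqE c34 c41 e12 e23 !eqxx.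
have /eqP c23 : c2 == c3 by rewrite h23.
case: (eqVneq d4 d1) => e41.
  by move: n24; rewrite xpair_eqE c23 c34 e41 e12 !eqxx.
have /eqP c41 : c4 == c1 by rewrite h41.
by move: h12; rewrite e12 eqxx c23 c34 c41 eqxx.
Qed.

Lemma square_eq (T1 T2 : eqType) (y1 y2 y3 y4 : T1 * T2) :
  (y1.1 == y2.1) = (y1.2 != y2.2) -> (y2.1 == y3.1) = (y2.2 != y3.2) ->
  (y3.1 == y4.1) = (y3.2 != y4.2) -> (y4.1 == y1.1) = (y4.2 != y1.2) ->
  y1 != y3 -> y2 != y4 -> (y1.2 == y2.2) = (y4.2 == y3.2).
Proof.
move=> h12 h23 h34 h41 n13 n24; apply/idP/idP; first exact: square_dir.
apply: (@square_dir _ _ y4 y3 y2 y1).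
- by rewrite eq_sym h34 eq_sym.
- by rewrite eq_sym h23 eq_sym.
- by rewrite eq_sym h12 eq_sym.
- by rewrite eq_sym h41 eq_sym.
- by rewrite eq_sym.
- by rewrite eq_sym.
Qed.

Section Split.
Variables A B C D : graph.
Variable f : gV A * gV B -> gV C * gV D.
Variable g : gV C * gV D -> gV A * gV B.
Hypothesis fK : cancel f g.
Hypothesis gK : cancel g f.
Hypothesis hE : forall x y, cprod_rel A B x y = cprod_rel C D (f x) (f y).
Variables (a0 : gV A) (b0 : gV B).

Local Notation d x := (f x).2.
Local Notation d0 := (f (a0, b0)).2.
Local Notation c0 := (f (a0, b0)).1.

Lemma f_adj x y : cprod_rel A B x y -> ((f x).1 == (f y).1) = ((f x).2 != (f y).2).
Proof. by move=> h; apply: adj_xor; rewrite -hE. Qed.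

Lemma f_neq x y : x != y -> f x != f y.
Proof. by apply: contra => /eqP /(can_inj fK) ->. Qed.

Lemma typeA_local a a' b b' : gE A a a' -> gE B b b' ->
  (d (a, b) == d (a', b)) = (d (a, b') == d (a', b')).
Proof.
move=> ha hb.
have nea : a != a' by apply: contraTneq ha => ->; rewrite gE_irr.
have neb : b != b' by apply: contraTneq hb => ->; rewrite gE_irr.
apply: (@square_eq _ _ (f (a, b)) (f (a', b)) (f (a', b')) (f (a, b'))).
- by apply: f_adj; rewrite /cprod_rel /= eqxx ha orbT.
- by apply: f_adj; rewrite /cprod_rel /= eqxx hb.
- by apply: f_adj; rewrite /cprod_rel /= eqxx gE_sym ha orbT.
- by apply: f_adj; rewrite /cprod_rel /= eqxx gE_sym hb.
- by apply: f_neq; rewrite xpair_eqE (negbTE nea).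
- by apply: f_neq; rewrite xpair_eqE eq_sym (negbTE nea).
Qed.

Lemma typeB_local a a' b b' : gE A a a' -> gE B b b' ->
  (d (a, b) == d (a, b')) = (d (a', b) == d (a', b')).
Proof.
move=> ha hb.
have nea : a != a' by apply: contraTneq ha => ->; rewrite gE_irr.
have neb : b != b' by apply: contraTneq hb => ->; rewrite gE_irr.
apply: (@square_eq _ _ (f (a, b)) (f (a, b')) (f (a', b')) (f (a', b))).
- by apply: f_adj; rewrite /cprod_rel /= eqxx hb.
- by apply: f_adj; rewrite /cprod_rel /= eqxx ha orbT.
- by apply: f_adj; rewrite /cprod_rel /= eqxx gE_sym hb.
- by apply: f_adj; rewrite /cprod_rel /= eqxx gE_sym ha orbT.
- by apply: f_neq; rewrite xpair_eqE (negbTE nea).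
- by apply: f_neq; rewrite xpair_eqE (negbTE nea).
Qed.

Hypothesis connA : forall x y : gV A, connect (gE A) x y.
Hypothesis connB : forall x y : gV B, connect (gE B) x y.
Hypothesis connC : forall x y : gV C, connect (gE C) x y.

Lemma typeA a a' b : gE A a a' ->
  (d (a, b0) == d (a', b0)) = (d (a, b) == d (a', b)).
Proof.
move=> ha.
have cl : closed (gE B) [pred y | d (a, y) == d (a', y)].
  by move=> y y' hy; rewrite !inE (typeA_local _ _ _ _ ha hy).
by have := closed_connect cl (connB b0 b); rewrite !inE.
Qed.

Lemma typeB b b' a : gE B b b' ->
  (d (a0, b) == d (a0, b')) = (d (a, b) == d (a, b')).
Proof.
move=> hb.
have cl : closed (gE A) [pred x | d (x, b) == d (x, b')].
  by move=> y y' hy; rewrite !inE (typeB_local _ _ _ _ hy hb).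
by have := closed_connect cl (connA a0 a); rewrite !inE.
Qed.

Definition eg : rel (gV A * gV B) := fun x y => cprod_rel A B x y && (d x == d y).

Definition kinv (x : gV A * gV B) :=
  ([ffun b => d (x.1, b)], [ffun a => d (a, x.2)]).

Lemma kinv_step x y : eg x y -> kinv x = kinv y.
Proof.
case: x y => [a b] [a' b']; rewrite /eg /cprod_rel /= => /andP[].
case/orP=> /andP[/eqP eqa h] hd.
  subst a'; congr (_, _); apply/ffunP => z; rewrite !ffunE //.
  by apply/eqP; rewrite -(typeB _ _ z h) (typeB _ _ a h).
subst b'; congr (_, _); apply/ffunP => z; rewrite !ffunE //.
by apply/eqP; rewrite -(typeA _ _ z h) (typeA _ _ b h).
Qed.

Lemma conn_layer x : d x = d0 -> connect eg (a0, b0) x.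
Proof.
move=> hx.
have lift : forall c1 c2, gE C c1 c2 -> connect eg (g (c1, d0)) (g (c2, d0)).
  move=> c1 c2 h; apply: connect1; rewrite /eg !gK /= eqxx andbT.
  by rewrite hE !gK /cprod_rel /= eqxx h orbT.
have := @connect_hom _ _ _ _ _ lift _ _ (connC c0 (f x).1).
have -> : (c0, d0) = f (a0, b0) by case: (f _).
by rewrite fK -hx; case: (f x) (fK x) => u v /= ->.
Qed.

Lemma layer_char a b :
  (d (a, b) == d0) = (d (a, b0) == d0) && (d (a0, b) == d0).
Proof.
apply/idP/andP => [/eqP h | [/eqP h1 /eqP h2]].
  have := @connect_inv _ _ _ _ kinv_step _ _ (conn_layer _ h).
  rewrite /kinv; case=> /ffunP k1 /ffunP k2; split.
    by move: (k1 b0); rewrite !ffunE /= => <-.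
  by move: (k2 a0); rewrite !ffunE /= => <-.
have := @connect_inv _ _ _ _ kinv_step _ _ (conn_layer _ h1).
rewrite /kinv; case=> /ffunP k1; have := k1 b; rewrite !ffunE /= => e.
by rewrite -e h2.
Qed.

Lemma fpair x : d x = d0 -> ((f x).1, d0) = f x.
Proof. by move=> hx; rewrite -hx -surjective_pairing. Qed.

Definition PA := induced A [pred a | d (a, b0) == d0].
Definition RB := induced B [pred b | d (a0, b) == d0].

Lemma split_iso : isomorphic (cprod PA RB) C.
Proof.
have p0 : [pred a | d (a, b0) == d0] a0 by rewrite /= eqxx.
have r0 : [pred b | d (a0, b) == d0] b0 by rewrite /= eqxx.
pose P0 : gV PA := Sub a0 p0.
pose R0 : gV RB := Sub b0 r0.
apply: (@isoP (cprod PA RB) C (fun x => (f (val x.1, val x.2)).1)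
   (fun c => (insubd P0 (g (c, d0)).1, insubd R0 (g (c, d0)).2))).
- case=> p r /=.
  have hd : d (val p, val r) = d0.
    by apply/eqP; rewrite layer_char; apply/andP; split; [exact: (valP p) | exact: (valP r)].
  rewrite (fpair _ hd).
  by rewrite fK /=; congr (_, _); apply: val_inj; rewrite insubdK //; apply: valP.
- move=> c /=.
  have hx : d ((g (c, d0)).1, (g (c, d0)).2) = d0 by rewrite -surjective_pairing gK.
  move/eqP: hx; rewrite layer_char => /andP[h1 h2].
  by rewrite !insubdK // -surjective_pairing gK.
case=> p r [p' r'] /=.
have hd : forall (p : gV PA) (r : gV RB), d (val p, val r) = d0.
  by move=> u v; apply/eqP; rewrite layer_char; apply/andP; split; [exact: (valP u) | exact: (valP v)].
have e1 : cprod_rel PA RB (p, r) (p', r') = cprod_rel A B (val p, val r) (val p', val r').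
  by rewrite /cprod_rel /= !val_eqE.
rewrite e1 hE /cprod_rel /= !hd eqxx gE_irr andbF /=.
by [].
Qed.

Lemma layer_iso :
  isomorphic PA (induced C [pred c | (g (c, d0)).2 == (g (c0, d0)).2]).
Proof.
have e0 : g (c0, d0) = (a0, b0) by rewrite -surjective_pairing fK.
have p0 : [pred a | d (a, b0) == d0] a0 by rewrite /= eqxx.
have q0 : [pred c | (g (c, d0)).2 == (g (c0, d0)).2] c0 by rewrite /= eqxx.
pose P0 : gV PA := Sub a0 p0.
pose Q0 : gV (induced C [pred c | (g (c, d0)).2 == (g (c0, d0)).2]) := Sub c0 q0.
have fab : forall a, d (a, b0) = d0 -> f (a, b0) = ((f (a, b0)).1, d0).
  by move=> a h; rewrite (fpair _ h).
have memQ : forall a, d (a, b0) = d0 ->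
    [pred c | (g (c, d0)).2 == (g (c0, d0)).2] (f (a, b0)).1.
  by move=> a h; rewrite /= -fab // fK e0.
have hq : forall c, [pred c | (g (c, d0)).2 == (g (c0, d0)).2] c ->
    g (c, d0) = ((g (c, d0)).1, b0).
  move=> c; rewrite /= e0 /= => /eqP h.
  by move: h; case: (g (c, d0)) => u v /= ->.
have memP : forall c, [pred c | (g (c, d0)).2 == (g (c0, d0)).2] c ->
    [pred a | d (a, b0) == d0] (g (c, d0)).1.
  by move=> c hc; rewrite /= -(hq _ hc) gK.
have hp : forall p : gV PA, d (val p, b0) = d0 by move=> u; apply/eqP; apply: (valP u).
apply: (@isoP PA (induced C [pred c | (g (c, d0)).2 == (g (c0, d0)).2])
   (fun p : gV PA => insubd Q0 (f (val p, b0)).1)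
   (fun q => insubd P0 (g (val q, d0)).1)).
- move=> p; apply: val_inj => /=.
  rewrite (insubdK Q0 (memQ _ (hp p))).
  rewrite -(fab _ (hp p)) fK /= insubdK //.
  by apply/eqP; exact: hp p.
- move=> q; apply: val_inj => /=.
  case: q => c hc /=.
  have e1 := insubdK P0 (memP _ hc); simpl in e1; rewrite e1.
  have e2 : [pred c | (g (c, d0)).2 == (g (c0, d0)).2] (f ((g (c, d0)).1, b0)).1.
    by rewrite -(hq _ hc) gK.
  have e3 := insubdK Q0 e2; simpl in e3; rewrite e3.
  by rewrite -(hq _ hc) gK.
move=> p p' /=.
rewrite (insubdK Q0 (memQ _ (hp p))) (insubdK Q0 (memQ _ (hp p'))).
have -> : gE A (val p) (val p') = cprod_rel A B (val p, b0) (val p', b0).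
  by rewrite /cprod_rel /= eqxx gE_irr andbF.
by rewrite hE (fab _ (hp p)) (fab _ (hp p')) /cprod_rel /= eqxx gE_irr andbF.
Qed.

End Split.

Definition sw {X Y : Type} (x : X * Y) : Y * X := (x.2, x.1).

Lemma swK {X Y : Type} : cancel (@sw X Y) (@sw Y X).
Proof. by case. Qed.

Lemma cprod_rel_sw (X Y : graph) u v : cprod_rel X Y u v = cprod_rel Y X (sw u) (sw v).
Proof. by rewrite /cprod_rel /= orbC. Qed.

Lemma conn_of G : connected G -> forall x y : gV G, connect (gE G) x y.
Proof. by case. Qed.
Arguments conn_of {G}.
Arguments split_iso {A B C D f g} fK gK hE a0 b0 connA connB connC.
Arguments layer_iso {A B C D f g} fK gK hE a0 b0.

Theorem refinement (A B C D : graph) :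
  connected A -> connected B -> connected C -> connected D ->
  isomorphic (cprod A B) (cprod C D) ->
  exists P Q R S : graph, [/\ isomorphic A (cprod P Q), isomorphic B (cprod R S),
    isomorphic C (cprod P R) & isomorphic D (cprod Q S)].
Proof.
move=> cA cB cC cD [f [[g fK gK] hE]].
have [a0 _] : {a0 : gV A | true}.
  by case: cA => /card_gt0P /sigW [a _] _; exists a.
have [b0 _] : {b0 : gV B | true}.
  by case: cB => /card_gt0P /sigW [b _] _; exists b.
have nA := conn_of cA; have nB := conn_of cB; have nC := conn_of cC; have nD := conn_of cD.
have hE0 : forall x y, cprod_rel A B x y = cprod_rel C D (f x) (f y) by exact: hE.
have hEg : forall x y, cprod_rel C D x y = cprod_rel A B (g x) (g y).
  by move=> x y; rewrite hE0 !gK.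
have hE1 : forall x y, cprod_rel A B x y = cprod_rel D C ((sw \o f) x) ((sw \o f) y).
  by move=> x y; rewrite hE0 cprod_rel_sw.
have hE2 : forall x y, cprod_rel C D x y = cprod_rel B A ((sw \o g) x) ((sw \o g) y).
  by move=> x y; rewrite hEg cprod_rel_sw.
have hE3 : forall x y, cprod_rel B A x y = cprod_rel C D ((f \o sw) x) ((f \o sw) y).
  by move=> x y; rewrite cprod_rel_sw hE0.
have hE4 : forall x y, cprod_rel B A x y = cprod_rel D C ((sw \o f \o sw) x) ((sw \o f \o sw) y).
  by move=> x y; rewrite cprod_rel_sw hE0 cprod_rel_sw.
have K1 : cancel (sw \o f) (g \o sw) by move=> x /=; rewrite swK fK.
have K1' : cancel (g \o sw) (sw \o f) by move=> x /=; rewrite gK swK.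
have K2 : cancel (sw \o g) (f \o sw) by move=> x /=; rewrite swK gK.
have K2' : cancel (f \o sw) (sw \o g) by move=> x /=; rewrite fK swK.
have K4 : cancel (sw \o f \o sw) (sw \o g \o sw) by move=> x /=; rewrite swK fK swK.
have K4' : cancel (sw \o g \o sw) (sw \o f \o sw) by move=> x /=; rewrite swK gK swK.
pose c0 := (f (a0, b0)).1; pose d0 := (f (a0, b0)).2.
exists (PA A B C D f a0 b0), (PA A B D C (sw \o f) a0 b0),
       (RB A B C D f a0 b0), (RB A B D C (sw \o f) a0 b0); split.
- apply: iso_trans (iso_sym (split_iso gK fK hEg c0 d0 nC nD nA)) _.
  apply: cprod_iso; apply: iso_sym.
    exact: (layer_iso fK gK hE0 a0 b0).
  exact: (layer_iso K1 K1' hE1 a0 b0).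
- apply: iso_trans (iso_sym (split_iso K2 K2' hE2 c0 d0 nC nD nB)) _.
  apply: cprod_iso; apply: iso_sym.
    exact: (layer_iso K2' K2 hE3 b0 a0).
  exact: (layer_iso K4 K4' hE4 b0 a0).
- exact: iso_sym (split_iso fK gK hE0 a0 b0 nA nB nC).
exact: iso_sym (split_iso K1 K1' hE1 a0 b0 nA nB nD).
Qed.

Module CombPart.
Set Implicit Arguments.
Unset Strict Implicit.

Definition K1rel : rel unit := fun _ _ => false.
Definition K1 : graph := @Graph unit K1rel (fun _ _ => erefl) (fun _ => erefl).

Lemma card_K1 : #|gV K1| = 1%N.
Proof. exact: card_unit. Qed.

Lemma cart_factor_self G : cart_factor G G.
Proof. by exists K1; apply: iso_sym; apply: cprod_unit; exact: card_K1. Qed.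

Lemma cart_factor_trans Pr R G T :
  cart_factor Pr R -> isomorphic G (cprod R T) -> cart_factor Pr G.
Proof.
case=> U hR hG; exists (cprod U T).
apply: iso_trans hG _; apply: iso_trans (cprod_iso hR (iso_refl T)) _.
exact: cprod_assoc.
Qed.

Lemma iso_comm_r G R T : isomorphic G (cprod T R) -> isomorphic G (cprod R T).
Proof. by move=> h; apply: iso_trans h (cprod_comm _ _). Qed.

Lemma exists_prime_factor R : nontrivial R ->
  exists Pr, cart_prime Pr /\ cart_factor Pr R.
Proof.
move: {2}#|gV R| (leqnn #|gV R|) => n; elim: n R => [|n IH] R hn hR.
  by move: hR; rewrite /nontrivial; move: hn; case: #|gV R|.
case: (classic (cart_prime R)) => hp.
  by exists R; split => //; exact: cart_factor_self.
have : exists G1 G2 : graph, nontrivial G1 /\ nontrivial G2 /\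
          isomorphic R (cprod G1 G2).
  by apply: NNPP => hn'; apply: hp; split.
case=> G1 [G2 [h1 [h2 hi]]].
have hc := iso_card hi; rewrite card_cprod in hc.
have lt1 : (#|gV G1| < #|gV R|)%N.
  rewrite hc -{1}(muln1 #|gV G1|) ltn_pmul2l //.
  by apply: leq_trans _ h1.
have [Pr [pP fP]] := IH G1 (leq_trans (leq_trans lt1 hn) (leqnn _) : (#|gV G1| <= n)%N) h1.
by exists Pr; split => //; exact: cart_factor_trans fP hi.
Qed.

Lemma conn_card G : connected G -> (0 < #|gV G|)%N.
Proof. by case. Qed.

Lemma unit_factor_iso G P Q : #|gV Q| = 1%N -> isomorphic G (cprod P Q) -> isomorphic G P.
Proof. by move=> hQ h; apply: iso_trans h (cprod_unit _ _ hQ). Qed.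

Lemma pos_factor G P Q : (0 < #|gV G|)%N -> isomorphic G (cprod P Q) ->
  (0 < #|gV P|)%N /\ (0 < #|gV Q|)%N.
Proof.
move=> h hi; have := iso_card hi; rewrite card_cprod => e.
by move: h; rewrite e muln_gt0 => /andP.
Qed.

Lemma prime_split G P Q : cart_prime G -> isomorphic G (cprod P Q) ->
  ~ (nontrivial P /\ nontrivial Q).
Proof. by case=> _ hn hi [hP hQ]; apply: hn; exists P, Q. Qed.

Lemma card1_of (X : graph) : (0 < #|gV X|)%N -> ~ nontrivial X -> #|gV X| = 1%N.
Proof. by rewrite /nontrivial; case: #|gV X| => [|[|n]]. Qed.

Lemma shared_trivial A B C D P Q R S :
  connected A -> connected B -> connected C -> connected D ->
  ~ isomorphic A D -> ~ isomorphic C B ->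
  isomorphic A (cprod P Q) -> isomorphic B (cprod R S) ->
  isomorphic C (cprod P R) -> isomorphic D (cprod Q S) ->
  ((cart_prime A /\ cart_prime B /\ cart_prime C /\ cart_prime D) \/
   (coprime #|gV A| #|gV D| /\ coprime #|gV C| #|gV B|) \/
   (~ (exists Pr, cart_prime Pr /\ cart_factor Pr A /\ cart_factor Pr D) /\
    ~ (exists Pr, cart_prime Pr /\ cart_factor Pr C /\ cart_factor Pr B))) ->
  #|gV Q| = 1%N /\ #|gV R| = 1%N.
Proof.
move=> cA cB cC cD nAD nCB hA hB hC hD hcond.
have [pP pQ] := pos_factor (conn_card cA) hA.
have [pR pS] := pos_factor (conn_card cB) hB.
case: hcond => [[rA [rB [rC rD]]] | [[cop1 cop2] | [n1 n2]]].
- split; apply: card1_of => // ntr.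
    have tP : ~ nontrivial P by move=> tP; exact: (prime_split rA hA).
    have tS : ~ nontrivial S by move=> tS; exact: (prime_split rD hD).
    apply: nAD; apply: iso_trans (unit_factor_iso (card1_of pP tP) (iso_comm_r hA)) _.
    apply: iso_sym; exact: unit_factor_iso (card1_of pS tS) hD.
  have tP : ~ nontrivial P by move=> tP; exact: (prime_split rC hC).
  have tS : ~ nontrivial S by move=> tS; exact: (prime_split rB hB).
  apply: nCB; apply: iso_trans (unit_factor_iso (card1_of pP tP) (iso_comm_r hC)) _.
  apply: iso_sym; exact: unit_factor_iso (card1_of pS tS) hB.
- have eA := iso_card hA; have eB := iso_card hB; have eC := iso_card hC; have eD := iso_card hD.
  rewrite card_cprod in eA eB eC eD.
  split.
    have : (#|gV Q| %| gcdn #|gV A| #|gV D|)%N.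
      by rewrite dvdn_gcd eA eD !card_cprod; apply/andP; split; [exact: dvdn_mull _ (dvdnn _) | exact: dvdn_mulr _ (dvdnn _)].
    by rewrite (eqP cop1) dvdn1 => /eqP.
  have : (#|gV R| %| gcdn #|gV C| #|gV B|)%N.
    by rewrite dvdn_gcd eC eB !card_cprod; apply/andP; split; [exact: dvdn_mull _ (dvdnn _) | exact: dvdn_mulr _ (dvdnn _)].
  by rewrite (eqP cop2) dvdn1 => /eqP.
- split; apply: card1_of => // ntr.
    have [Pr [pr fr]] := exists_prime_factor ntr.
    apply: n1; exists Pr; split => //; split.
      exact: cart_factor_trans fr (iso_comm_r hA).
    exact: cart_factor_trans fr hD.
  have [Pr [pr fr]] := exists_prime_factor ntr.
  apply: n2; exists Pr; split => //; split.
    exact: cart_factor_trans fr (iso_comm_r hC).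
  exact: cart_factor_trans fr hB.
Qed.

Lemma key_iso A B C D :
  connected A -> connected B -> connected C -> connected D ->
  ~ isomorphic A D -> ~ isomorphic C B ->
  isomorphic (cprod A B) (cprod C D) ->
  ((cart_prime A /\ cart_prime B /\ cart_prime C /\ cart_prime D) \/
   (coprime #|gV A| #|gV D| /\ coprime #|gV C| #|gV B|) \/
   (~ (exists Pr, cart_prime Pr /\ cart_factor Pr A /\ cart_factor Pr D) /\
    ~ (exists Pr, cart_prime Pr /\ cart_factor Pr C /\ cart_factor Pr B))) ->
  isomorphic A C /\ isomorphic B D.
Proof.
move=> cA cB cC cD nAD nCB hi hcond.
have [P [Q [R [S [hA hB hC hD]]]]] := @refinement A B C D cA cB cC cD hi.
have [q1 r1] := shared_trivial cA cB cC cD nAD nCB hA hB hC hD hcond.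
split.
  apply: iso_trans (unit_factor_iso q1 hA) _.
  exact: iso_sym (unit_factor_iso r1 hC).
apply: iso_trans (unit_factor_iso r1 (iso_comm_r hB)) _.
exact: iso_sym (unit_factor_iso q1 (iso_comm_r hD)).
Qed.

End CombPart.
Import CombPart.

Module SpecPart.
Set Implicit Arguments.
Unset Strict Implicit.
Import GRing.Theory.
Local Open Scope ring_scope.

Section Mx.
Variable R : comNzRingType.

Definition mxof (T : finType) (M : T -> T -> R) : 'M[R]_#|T| :=
  \matrix_(i, j) M (enum_val i) (enum_val j).

Lemma char_poly_conj n (A P Q : 'M[R]_n) : P *m Q = 1%:M ->
  char_poly (P *m A *m Q) = char_poly A.
Proof.
move=> PQ; rewrite /char_poly.
have -> : char_poly_mx (P *m A *m Q) =
    map_mx polyC P *m char_poly_mx A *m map_mx polyC Q.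
  rewrite /char_poly_mx mulmxBr mulmxBl !map_mxM mul_mx_scalar -scalemxAl.
  congr (_ - _).
  by rewrite -map_mxM PQ map_mx1 scalemx1.
have hPQ : map_mx polyC P *m map_mx polyC Q = 1%:M by rewrite -map_mxM PQ map_mx1.
by rewrite !det_mulmx mulrAC -det_mulmx hPQ det1 mul1r.
Qed.

Lemma char_poly_reindex n m (A : 'M[R]_n) (B : 'M[R]_m) (h : 'I_n -> 'I_m) :
  bijective h -> (forall i j, B (h i) (h j) = A i j) -> char_poly A = char_poly B.
Proof.
move=> hb hB.
have e : n = m by rewrite -(card_ord n) -(card_ord m); exact: bij_eq_card hb.
subst m; pose s := perm (bij_inj hb).
have -> : A = perm_mx s *m B *m perm_mx s^-1.
  apply/matrixP => i j; rewrite -row_permE -col_permE !mxE /s !permE.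
  by rewrite hB.
by apply: char_poly_conj; rewrite -perm_mxM mulgV perm_mx1.
Qed.

Lemma char_poly_mxof_bij (T T' : finType) (M : T -> T -> R) (M' : T' -> T' -> R)
    (h : T -> T') : bijective h -> (forall x y, M' (h x) (h y) = M x y) ->
  char_poly (mxof M) = char_poly (mxof M').
Proof.
move=> [k hK kK] hM.
apply: (@char_poly_reindex _ _ _ _ (fun i => enum_rank (h (enum_val i)))).
  exists (fun j => enum_rank (k (enum_val j))) => i /=.
    by rewrite enum_rankK hK enum_valK.
  by rewrite enum_rankK kK enum_valK.
by move=> i j; rewrite !mxE !enum_rankK hM.
Qed.

End Mx.

Definition repf (m : mat_kind) (G : graph) (x y : gV G) : int :=
  match m with
  | Adjacency => (gE G x y : nat)%:Z
  | Laplacian => (if x == y then (degree x)%:Z else 0) - (gE G x y : nat)%:Z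
  end.

Lemma rep_mxE m G : rep_mx m G = mxof (@repf m G).
Proof.
case: m; apply/matrixP => i j; rewrite !mxE //.
by rewrite /repf /vidx (inj_eq enum_val_inj).
Qed.

Lemma degree_iso (G H : graph) (f : gV G -> gV H) : bijective f ->
  (forall x y, gE G x y = gE H (f x) (f y)) -> forall x, degree (f x) = degree x.
Proof.
move=> fb hE x; rewrite /degree.
have [g fK gK] := fb.
have -> : [set y | gE H (f x) y] = f @: [set y | gE G x y].
  apply/setP => z; rewrite inE -{1}(gK z) -hE.
  by rewrite -{2}(gK z) mem_imset ?inE //; exact: can_inj fK.
by rewrite card_imset //; exact: can_inj fK.
Qed.

Lemma iso_spec m G H : isomorphic G H -> same_spectrum m G H.
Proof.
case=> f [fb hE]; rewrite /same_spectrum /spectrum !rep_mxE.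
apply: (char_poly_mxof_bij fb) => x y; case: m => /=; rewrite -hE //.
by rewrite (inj_eq (bij_inj fb)) (degree_iso fb hE).
Qed.
Set Implicit Arguments.
Unset Strict Implicit.
Import GRing.Theory Num.Theory.
Local Open Scope ring_scope.

Section Kron.
Variable R : comNzRingType.

Lemma sum_enum (T : finType) (F : T -> R) :
  \sum_(k < #|T|) F (enum_val k) = \sum_x F x.
Proof.
by rewrite (reindex (fun k : 'I_#|T| => enum_val k)) //; apply: onW_bij; exact: enum_val_bij.
Qed.

Definition kron n m (P : 'M[R]_n) (Q : 'M[R]_m) : 'M[R]_#|{: 'I_n * 'I_m}| :=
  mxof (fun x y : 'I_n * 'I_m => P x.1 y.1 * Q x.2 y.2).

Lemma kron_mul n m (P P' : 'M[R]_n) (Q Q' : 'M[R]_m) :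
  kron P Q *m kron P' Q' = kron (P *m P') (Q *m Q').
Proof.
apply/matrixP => i j; rewrite !mxE.
under eq_bigr do rewrite !mxE.
rewrite (sum_enum (fun k : 'I_n * 'I_m =>
   P (enum_val i).1 k.1 * Q (enum_val i).2 k.2 * (P' k.1 (enum_val j).1 * Q' k.2 (enum_val j).2))).
rewrite big_distrlr /= pair_big /=.
by apply: eq_bigr => -[a b] _ /=; rewrite mulrACA.
Qed.

Lemma kron1 n m : kron (1%:M : 'M[R]_n) (1%:M : 'M[R]_m) = 1%:M.
Proof.
apply/matrixP => i j; rewrite !mxE -natrM mulnb -xpair_eqE -!surjective_pairing.
by rewrite (inj_eq enum_val_inj).
Qed.

Lemma kronDl n m (P1 P2 : 'M[R]_n) (Q : 'M[R]_m) :
  kron (P1 + P2) Q = kron P1 Q + kron P2 Q.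
Proof. by apply/matrixP => i j; rewrite !mxE mulrDl. Qed.

Definition ksum n m (A : 'M[R]_n) (B : 'M[R]_m) := kron A 1%:M + kron 1%:M B.

Lemma ksum_conj n m (D U Ui : 'M[R]_n) (E V Vi : 'M[R]_m) :
  Ui *m U = 1%:M -> Vi *m V = 1%:M ->
  ksum (Ui *m D *m U) (Vi *m E *m V) = kron Ui Vi *m ksum D E *m kron U V.
Proof.
move=> hU hV; rewrite /ksum mulmxDr mulmxDl !kron_mul !mulmx1 hU hV.
by [].
Qed.

Lemma ksum_diag n m (d : 'rV[R]_n) (e : 'rV[R]_m) :
  ksum (diag_mx d) (diag_mx e) =
  diag_mx (\row_k (d 0 (enum_val k).1 + e 0 (enum_val k).2)).
Proof.
apply/matrixP => i j; rewrite !mxE.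
case: (eqVneq i j) => [<-|nij]; first by rewrite !eqxx !mulr1n mulr1 mul1r.
rewrite mulr0n.
have : ((enum_val i).1 != (enum_val j).1) || ((enum_val i).2 != (enum_val j).2).
  rewrite -negb_and -xpair_eqE -!surjective_pairing (inj_eq enum_val_inj).
  exact: nij.
by case/orP => /negbTE ->; rewrite ?mulr0n ?mul0r ?mulr0 ?add0r ?addr0.
Qed.

End Kron.

Definition polyprod (s t : seq algC) : {poly algC} :=
  \prod_(x <- s) \prod_(y <- t) ('X - (x + y)%:P).

Lemma prod_ord_seq n (F : algC -> {poly algC}) (d : 'I_n -> algC) :
  \prod_(i < n) F (d i) = \prod_(x <- [seq d i | i <- enum 'I_n]) F x.
Proof. by rewrite big_map big_enum. Qed.

Lemma eig n (A : 'M[int]_n) : A^T = A ->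
  exists U : 'M[algC]_n, exists d : 'rV[algC]_n,
    U \in unitmx /\ map_mx intr A = invmx U *m diag_mx d *m U.
Proof.
move=> hA.
have hn : map_mx (intr : int -> algC) A \is normalmx.
  apply: symmetric_normalmx.
    apply/is_hermitianmxP; rewrite expr0 scale1r.
    apply/matrixP => i j; rewrite !mxE.
    by have := congr1 (fun M : 'M[int]_n => M j i) hA; rewrite mxE => ->.
  by apply/mxOverP => i j; rewrite mxE realz.
move/orthomx_spectralP: hn => hdec.
exists (spectralmx (map_mx (intr : int -> algC) A)),
       (spectral_diag (map_mx (intr : int -> algC) A)).
by split => //; exact: spectral_unit.
Qed.
Set Implicit Arguments.
Unset Strict Implicit.
Import GRing.Theory Num.Theory.
Local Open Scope ring_scope.

Lemma prod_enum (T : finType) (F : T -> {poly algC}) :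
  \prod_(k < #|T|) F (enum_val k) = \prod_x F x.
Proof.
by rewrite (reindex (fun k : 'I_#|T| => enum_val k)) //; apply: onW_bij; exact: enum_val_bij.
Qed.

Lemma map_ksum n m (A : 'M[int]_n) (B : 'M[int]_m) :
  map_mx (intr : int -> algC) (ksum A B) = ksum (map_mx intr A) (map_mx intr B).
Proof.
apply/matrixP => i j; rewrite !mxE rmorphD !rmorphM /=.
by rewrite !rmorph_nat.
Qed.

Lemma char_poly_decomp n (U : 'M[algC]_n) (d : 'rV[algC]_n) : U \in unitmx ->
  char_poly (invmx U *m diag_mx d *m U) = \prod_(i < n) ('X - (d 0 i)%:P).
Proof.
move=> hU; rewrite char_poly_conj ?mulVmx // char_poly_trig ?diag_mx_is_trig //.
by apply: eq_bigr => i _; rewrite mxE eqxx mulr1n.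
Qed.

Lemma char_poly_ksum_decomp n m (U : 'M[algC]_n) (d : 'rV[algC]_n)
   (V : 'M[algC]_m) (e : 'rV[algC]_m) : U \in unitmx -> V \in unitmx ->
  char_poly (ksum (invmx U *m diag_mx d *m U) (invmx V *m diag_mx e *m V)) =
  polyprod [seq d 0 i | i <- enum 'I_n] [seq e 0 j | j <- enum 'I_m].
Proof.
move=> hU hV; rewrite ksum_conj ?mulVmx // char_poly_conj; last first.
  by rewrite kron_mul !mulVmx // kron1.
rewrite ksum_diag char_poly_trig ?diag_mx_is_trig //.
under eq_bigr do rewrite mxE eqxx mulr1n mxE.
rewrite (prod_enum (fun x : 'I_n * 'I_m => 'X - (d 0 x.1 + e 0 x.2)%:P)).
rewrite /polyprod -(prod_ord_seq (fun x => \prod_(y <- [seq e 0 j | j <- enum 'I_m]) ('X - (x + y)%:P)) (fun i => d 0 i)).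
under [RHS]eq_bigr => i _ do rewrite -(prod_ord_seq (fun y => 'X - (d 0 i + y)%:P) (fun j => e 0 j)).
by rewrite pair_big.
Qed.

Lemma ksum_spec n n' m m' (A : 'M[int]_n) (A' : 'M[int]_n') (B : 'M[int]_m)
    (B' : 'M[int]_m') :
  A^T = A -> A'^T = A' -> B^T = B -> B'^T = B' ->
  char_poly A = char_poly A' -> char_poly B = char_poly B' ->
  char_poly (ksum A B) = char_poly (ksum A' B').
Proof.
move=> sA sA' sB sB' eA eB.
apply: (@map_inj_poly _ _ (intr : int -> algC) intr_inj (rmorph0 _)).
rewrite !map_char_poly !map_ksum.
have [U [d [hU dA]]] := eig sA; have [U' [d' [hU' dA']]] := eig sA'.
have [V [e [hV dB]]] := eig sB; have [V' [e' [hV' dB']]] := eig sB'.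
rewrite dA dA' dB dB' !char_poly_ksum_decomp //.
have pA : perm_eq [seq d 0 i | i <- enum 'I_n] [seq d' 0 i | i <- enum 'I_n'].
  apply: prod_XsubC_eq.
  rewrite -(prod_ord_seq (fun x => 'X - x%:P) (fun i => d 0 i)).
  rewrite -(prod_ord_seq (fun x => 'X - x%:P) (fun i => d' 0 i)).
  rewrite -(char_poly_decomp d hU) -(char_poly_decomp d' hU').
  by rewrite -dA -dA' -!map_char_poly eA.
have pB : perm_eq [seq e 0 i | i <- enum 'I_m] [seq e' 0 i | i <- enum 'I_m'].
  apply: prod_XsubC_eq.
  rewrite -(prod_ord_seq (fun x => 'X - x%:P) (fun i => e 0 i)).
  rewrite -(prod_ord_seq (fun x => 'X - x%:P) (fun i => e' 0 i)).
  rewrite -(char_poly_decomp e hV) -(char_poly_decomp e' hV').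
  by rewrite -dB -dB' -!map_char_poly eB.
rewrite /polyprod (perm_big _ pA); apply: eq_bigr => x _.
exact: perm_big.
Qed.
Set Implicit Arguments.
Unset Strict Implicit.
Import GRing.Theory Num.Theory.
Local Open Scope ring_scope.

Lemma rep_sym m G : (rep_mx m G)^T = rep_mx m G.
Proof.
rewrite rep_mxE; apply/matrixP => i j; rewrite !mxE.
case: m => /=; first by rewrite gE_sym.
by rewrite gE_sym eq_sym; case: eqP => // ->.
Qed.

Lemma degree_cprod (G H : graph) (a : gV G) (b : gV H) :
  @degree (cprod G H) (a, b) = (@degree G a + @degree H b)%N.
Proof.
rewrite /degree.
have -> : [set y | gE (cprod G H) (a, b) y] =
   [set (x, b) | x in [set x | gE G a x]] :|: [set (a, y) | y in [set y | gE H b y]].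
  apply/setP => -[x y]; rewrite !inE /= /cprod_rel /=.
  apply/orP/orP => [[/andP[/eqP <- hb] | /andP[/eqP <- ha]] | [] /imsetP [z]].
  - by right; apply/imsetP; exists y; rewrite ?inE.
  - by left; apply/imsetP; exists x; rewrite ?inE.
  - by rewrite inE => hz [-> ->]; right; rewrite eqxx hz.
  - by rewrite inE => hz [-> ->]; left; rewrite eqxx hz.
rewrite cardsU !card_imset; first last.
- by move=> u v [].
- by move=> u v [].
have -> : [set (x, b) | x in [set x | gE G a x]] :&: [set (a, y) | y in [set y | gE H b y]] = set0.
  apply/setP => -[x y]; rewrite !inE.
  apply/negbTE/negP => /andP[/imsetP [z hz [e1 e2]] /imsetP [w _ [e3 e4]]].
  by move: hz; rewrite inE -e1 e3 gE_irr.
by rewrite cards0 subn0.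
Qed.

Lemma repf_cprod m (G H : graph) (a a' : gV G) (b b' : gV H) :
  @repf m (cprod G H) (a, b) (a', b') =
  @repf m G a a' * (b == b')%:R + (a == a')%:R * @repf m H b b'.
Proof.
case: m => /=; rewrite /cprod_rel /=.
  case: (eqVneq a a') => [<-|na]; case: (eqVneq b b') => [<-|nb];
    rewrite ?gE_irr /= ?mulr1 ?mul1r ?mulr0 ?mul0r ?addr0 ?add0r //.
  by rewrite orbF.
rewrite xpair_eqE.
case: (eqVneq a a') => [<-|na]; case: (eqVneq b b') => [<-|nb];
  rewrite ?gE_irr /= ?mulr1 ?mul1r ?mulr0 ?mul0r ?addr0 ?add0r ?orbF ?subr0 //.
by rewrite (degree_cprod a b) PoszD.
Qed.

Lemma mxofD (R : comNzRingType) (T : finType) (M1 M2 : T -> T -> R) :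
  mxof M1 + mxof M2 = mxof (fun x y => M1 x y + M2 x y).
Proof. by apply/matrixP => i j; rewrite !mxE. Qed.

Lemma prod_rep m G H :
  char_poly (rep_mx m (cprod G H)) = char_poly (ksum (rep_mx m G) (rep_mx m H)).
Proof.
rewrite /ksum /kron mxofD rep_mxE.
apply: (@char_poly_mxof_bij _ _ _ _ _ (fun x => (enum_rank x.1, enum_rank x.2))).
  exists (fun y => (enum_val y.1, enum_val y.2)) => -[u v] /=.
    by rewrite !enum_rankK.
  by rewrite !enum_valK.
move=> [a b] [a' b'] /=; rewrite !rep_mxE !mxE !enum_rankK repf_cprod.
by rewrite !(inj_eq enum_rank_inj).
Qed.

Lemma spec_cprod m G G' H H' :
  same_spectrum m G G' -> same_spectrum m H H' ->
  same_spectrum m (cprod G H) (cprod G' H').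
Proof.
rewrite /same_spectrum /spectrum => eG eH.
rewrite !prod_rep; apply: ksum_spec => //; exact: rep_sym.
Qed.

End SpecPart.
Import SpecPart.

Lemma cprod_connected G H : connected G -> connected H -> connected (cprod G H).
Proof.
move=> [pG cG] [pH cH]; split; first by rewrite card_cprod muln_gt0 pG pH.
move=> [a b] [a' b'].
have s1 : connect (gE (cprod G H)) (a, b) (a', b).
  apply: (@connect_hom _ _ (gE G) _ (fun x => (x, b))) (cG a a') => x y hxy.
  by apply: connect1; rewrite /= /cprod_rel /= eqxx hxy orbT.
have s2 : connect (gE (cprod G H)) (a', b) (a', b').
  apply: (@connect_hom _ _ (gE H) _ (fun y => (a', y))) (cH b b') => x y hxy.
  by apply: connect1; rewrite /= /cprod_rel /= eqxx hxy.
exact: connect_trans s1 s2.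
Qed.

Unset Implicit Arguments.
Set Strict Implicit.

Theorem theorem1 (m : mat_kind) (p q : nat)
    (G : 'I_p -> graph) (H : 'I_q -> graph) :
  (forall i, connected (G i)) ->
  (forall j, connected (H j)) ->
  mutually_cospectral m G ->
  mutually_cospectral m H ->
  (forall i j, ~ same_spectrum m (G i) (H j)) ->
  ((forall i, cart_prime (G i)) /\ (forall j, cart_prime (H j))) \/
  (forall i j, coprime #|gV (G i)| #|gV (H j)|) \/
  ~ (exists P : graph, cart_prime P /\
        exists i j, cart_factor P (G i) /\ cart_factor P (H j)) ->
  (forall ij : 'I_p * 'I_q, connected (cprod (G ij.1) (H ij.2))) /\
  mutually_cospectral m (fun ij : 'I_p * 'I_q => cprod (G ij.1) (H ij.2)).
Proof.
move=> cG cH [sG nG] [sH nH] nspec hcond.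
split; first by move=> [i j]; exact: cprod_connected.
split; first by move=> [i j] [k l] /=; apply: spec_cprod.
move=> [i j] [k l] hne /= hiso.
have nAD : ~ isomorphic (G i) (H l) by move=> h; apply: (nspec i l); exact: iso_spec.
have nCB : ~ isomorphic (G k) (H j) by move=> h; apply: (nspec k j); exact: iso_spec.
have cond : (cart_prime (G i) /\ cart_prime (H j) /\ cart_prime (G k) /\ cart_prime (H l)) \/
   (coprime #|gV (G i)| #|gV (H l)| /\ coprime #|gV (G k)| #|gV (H j)|) \/
   (~ (exists Pr, cart_prime Pr /\ cart_factor Pr (G i) /\ cart_factor Pr (H l)) /\
    ~ (exists Pr, cart_prime Pr /\ cart_factor Pr (G k) /\ cart_factor Pr (H j))).
  case: hcond => [[pG pH] | [cop | nc]].
  - by left.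
  - by right; left.
  right; right; split.
    by move=> [Pr [pr [fA fD]]]; apply: nc; exists Pr; split => //; exists i, l.
  by move=> [Pr [pr [fA fD]]]; apply: nc; exists Pr; split => //; exists k, j.
have [iso1 iso2] := key_iso (cG i) (cH j) (cG k) (cH l) nAD nCB hiso cond.
case: (eqVneq i k) => [eik|nik]; last by apply: (nG i k nik iso1).
case: (eqVneq j l) => [ejl|njl]; last by apply: (nH j l njl iso2).
by move: hne; rewrite eik ejl eqxx.
Qed.
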